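(* Let $E_3^*$ be the greedy exponential-progression-free set defined in the context. Then the exponential density of $\mathbb{N}\setminus E_3^*$ exists and equals $1/4$, i.e. $$\lim_{n\to\infty}\frac{\log\big(\#\{a\in \mathbb{N}\setminus E_3^* : a\le n\}\big)}{\log n} = \frac14.$$
   Context: An exponential progression is a triple $x, x^n, x^{n^2}$ with natural numbers $x, n > 1$. $E_3^*$ is constructed greedily: $1\in E_3^*$, and for $k=2,3,\dots$ in increasing order, $k$ is put into $E_3^*$ unless there are natural numbers $x,n>1$ with $x, x^n\in E_3^*$ and $k=x^{n^2}$. The upper exponential density of $A\subseteq\mathbb{N}$ is $\overline{e}(A)=\limsup_{n\to\infty}\frac{1}{\log n}\log\big(\#\{a\in A: a\le n\}\big)$; the lower exponential density uses $\liminf$, and the exponential density $e(A)$ is the common value when they agree. *)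

(* Defs.v *)
From mathcomp Require Import all_boot.
From Stdlib Require Import Reals.

Set Implicit Arguments.
Unset Strict Implicit.
Unset Printing Implicit Defensive.

(* Given s = [E(0); ...; E(k-1)] (membership bits of 0..k-1), decide whether
   k = size s is put into E_3^*:  1 is in E_3^*, 0 is not (N = {1,2,...}),
   and k >= 2 is in unless k = x^(n^2) with x, n > 1 and x, x^n already in.
   (The bounds x < k, n < k lose nothing: x^(n^2) = k with x,n >= 2 forces
   x < k and n < k, and then x^n < k too.) *)
Definition E3step (s : seq bool) : bool :=
  let k := size s in
  (k == 1) ||
  ((2 <= k) &&
   ~~ [exists x : 'I_k, [exists n : 'I_k,
        [&& 1 < x, 1 < n, x ^ (n ^ 2) == k,
            nth false s x & nth false s (x ^ n)]]]).

Definition E3list (n : nat) : seq bool :=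
  iter n (fun s => rcons s (E3step s)) [::].

Definition E3 (k : nat) : bool := nth false (E3list k.+1) k.

Definition compl_count (n : nat) : nat :=
  count (fun a => ~~ E3 a) (iota 1 n).

(* Main.v *)
Require Import Defs.
From mathcomp Require Import all_boot zify.

Lemma size_E3list n : size (E3list n) = n.
Proof. elim: n => //= n IH; by rewrite size_rcons IH. Qed.

Lemma nth_E3list n k : k < n -> nth false (E3list n) k = E3 k.
Proof.
elim: n => // n IH; rewrite ltnS leq_eqVlt => /orP[/eqP->|Hk].
  by rewrite /E3.
rewrite /= nth_rcons size_E3list Hk; exact: IH.
Qed.

Lemma E3E k : E3 k = E3step (E3list k).
Proof. by rewrite /E3 /= nth_rcons size_E3list ltnn eqxx. Qed.

Lemma powE m n : Nat.pow m n = m ^ n.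
Proof. elim: n => //= n IH; by rewrite IH expnS. Qed.

Lemma E3stepE s k : size s = k -> E3step s =
  (k == 1) ||
  ((2 <= k) &&
   ~~ [exists x : 'I_k, [exists n : 'I_k,
        [&& 1 < x, 1 < n, x ^ (n ^ 2) == k,
            nth false s x & nth false s (x ^ n)]]]).
Proof.
move=> Hs; subst k; rewrite /E3step; do 3 f_equal.
apply: eq_existsb => x; apply: eq_existsb => n; by rewrite !powE.
Qed.

Lemma compl_form k : 2 <= k -> ~~ E3 k ->
  exists x m, [/\ 2 <= x, 4 <= m & x ^ m = k].
Proof.
move=> Hk; rewrite E3E (@E3stepE _ _ (size_E3list k)) Hk /=.
rewrite (_ : (k == 1) = false); last by apply/negbTE; lia.
rewrite /= negbK => /existsP[x /existsP[n /and5P[H1 H2 /eqP H3 _ _]]].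
exists x, (n ^ 2); split => //.
by rewrite (leq_exp2r 2 n (isT : 0 < 2)).
Qed.

Lemma E3_good k : 2 <= k -> 0 < logn 2 k < 4 -> E3 k.
Proof.
move=> Hk Hl; rewrite E3E (@E3stepE _ _ (size_E3list k)) Hk /=; apply/orP; right.
apply/existsP => -[x /existsP[n /and5P[H1 H2 /eqP H3 _ _]]].
move: Hl; rewrite -H3 lognX.
have : 4 <= n ^ 2 by rewrite (leq_exp2r 2 n (isT : 0 < 2)).
move: (n ^ 2) (logn 2 x) => a b; clear.
case: b => [|b]; rewrite ?muln0 // mulnS; lia.
Qed.

Lemma logn2_42 j : logn 2 (4 * j + 2) = 1.
Proof.
have -> : 4 * j + 2 = 2 * (2 * j).+1 by lia.
rewrite lognM // (logn_coprime (m := (2*j).+1)) ?addn0.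
  by rewrite logn_prime.
by rewrite coprime2n /= oddM.
Qed.

Lemma compl_low j : ~~ E3 ((4 * j + 2) ^ 4).
Proof.
set x := 4 * j + 2.
have Hx : 2 <= x by rewrite /x; lia.
have Hx4 : x < x ^ 4.
  by rewrite -{1}(expn1 x) ltn_exp2l.
have Hx2 : x ^ 2 < x ^ 4 by rewrite ltn_exp2l.
have E1 : E3 x by apply: E3_good => //; rewrite logn2_42.
have E2 : E3 (x ^ 2).
  apply: E3_good; first by rewrite (leq_trans Hx) // -{1}(expn1 x) leq_exp2l //; lia.
  by rewrite lognX logn2_42.
rewrite E3E (@E3stepE _ _ (size_E3list _)) negb_or negbK.
apply/andP; split.
  apply/eqP => H; move: Hx4; rewrite H; lia.
rewrite negb_and; apply/orP; right.
apply/existsP; exists (Ordinal Hx4); apply/existsP.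
have H2 : 2 < x ^ 4 by lia.
exists (Ordinal H2) => /=.
rewrite Hx !nth_E3list // E1 E2 !andbT (_ : 2 ^ 2 = 4) // /=. exact/eqP.


Qed.

Lemma E3_1 : E3 1.
Proof. by []. Qed.

Lemma root4_ex N : exists r, r ^ 4 <= N < r.+1 ^ 4.
Proof.
elim: N => [|N [r /andP[H1 H2]]]; first by exists 0.
case: (ltnP N.+1 (r.+1 ^ 4)) => H3.
  by exists r; rewrite H3 andbT; lia.
exists r.+1; rewrite H3 /=.
have : r.+1 ^ 4 < r.+2 ^ 4 by rewrite ltn_exp2r.
lia.
Qed.

Lemma count_up N r : r ^ 4 <= N < r.+1 ^ 4 ->
  compl_count N <= r.+1 * (trunc_log 2 N).+1.
Proof.
move=> /andP[_ Hr].
rewrite /compl_count -size_filter.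
rewrite -(size_iota 0 r.+1) -(size_iota 0 (trunc_log 2 N).+1) -(size_allpairs (fun x m => x ^ m)).
apply: (@uniq_leq_size _ _ [seq x ^ m | x <- iota 0 r.+1, m <- iota 0 (trunc_log 2 N).+1]).
  by apply: filter_uniq; apply: iota_uniq.
move=> a; rewrite mem_filter mem_iota => /andP[Ha /andP[H1 H2]].
have H2' : a <= N by lia.
have Ha2 : 2 <= a.
  case: a Ha H1 {H2 H2'} => [|[|a]] //; by rewrite E3_1.
have [x [m [Hx Hm Hxm]]] := compl_form a Ha2 Ha.
apply/allpairsP; exists (x, m); split => //.
- rewrite mem_iota /= add0n ltnS.
  have : x ^ 4 < r.+1 ^ 4.
    apply: leq_ltn_trans Hr; apply: leq_trans H2'; rewrite -Hxm.
    by apply: leq_pexp2l => //; lia.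
  by rewrite ltn_exp2r // ltnS.
- rewrite mem_iota /= add0n ltnS.
  apply: trunc_log_max => //; apply: leq_trans H2'; rewrite -Hxm.
  by rewrite leq_exp2r //; lia.
Qed.

Lemma count_low N r : r ^ 4 <= N -> r %/ 4 <= compl_count N.
Proof.
move=> Hr.
rewrite /compl_count -size_filter -(size_iota 0 (r %/ 4)).
rewrite -(size_map (fun j => (4 * j + 2) ^ 4)).
apply: uniq_leq_size.
  rewrite map_inj_uniq ?iota_uniq //.
  move=> i j /(expIn (isT : 0 < 4)) /eqP; rewrite eqn_add2r eqn_mul2l /= => /eqP //.
move=> a /mapP[j]; rewrite mem_iota add0n => /andP[_ Hj] ->.
rewrite mem_filter compl_low /= mem_iota.
have Hj4 : 4 * j + 2 <= r.
  have := leq_trunc_div r 4; lia.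
apply/andP; split; first by rewrite expn_gt0; lia.
apply: (leq_ltn_trans (leq_trans _ Hr)); last lia.
by rewrite leq_exp2r.
Qed.
Lemma nat_facts N : 256 <= N -> exists r T,
  [/\ 4 <= r, 1 <= T, r ^ 4 <= N, 2 ^ T <= N &
      [/\ compl_count N <= r.+1 * T.+1,
      1 <= compl_count N & N <= (8 * compl_count N) ^ 4]].
Proof.
move=> HN.
have [r /andP[Hr1 Hr2]] := root4_ex N.
have Hr4 : 4 <= r.
  have : 4 ^ 4 < r.+1 ^ 4 by apply: leq_ltn_trans Hr2.
  by rewrite ltn_exp2r.
have Hq := count_low N r Hr1.
exists r, (trunc_log 2 N); split => //.
- by rewrite trunc_log_gt0; lia.
- by apply: trunc_logP; lia.
split.
- by apply: count_up; rewrite Hr1 Hr2.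
- lia.
  apply: (leq_trans (ltnW Hr2)); rewrite leq_exp2r //; lia.
Qed.

From Stdlib Require Import Reals Lra.
Open Scope R_scope.
Open Scope R_scope.

Lemma ln_le' x y : 0 < x -> x <= y -> ln x <= ln y.
Proof.
move=> Hx Hxy; destruct (Rle_lt_or_eq_dec _ _ Hxy) as [H|H].
- left; now apply ln_increasing.
- subst; lra.
Qed.

Lemma ln_le_id z : 0 < z -> ln z <= z - 1.
Proof. move=> Hz; have := exp_ineq1_le (ln z); rewrite exp_ln //; lra. Qed.

Lemma ln_le_sqrt y : 0 < y -> ln y <= 2 * sqrt y.
Proof.
move=> Hy.
have Hs : 0 < sqrt y by apply sqrt_lt_R0.
have E : ln y = 2 * ln (sqrt y).
  rewrite -{1}(sqrt_sqrt y); last lra.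
  rewrite ln_mult //; lra.
have := ln_le_id _ Hs; lra.
Qed.

Lemma real_conv (a L : nat -> R) :
  (exists N1, forall N, (N1 <= N)%nat ->
     1 <= L N /\ L N / 4 - 7 <= a N <= L N / 4 + 7 + 2 * sqrt (L N)) ->
  (forall M, exists N1, forall N, (N1 <= N)%nat -> M <= L N) ->
  Un_cv (fun N => a N / L N) (1 / 4).
Proof.
move=> [N1 H1] H2 eps Heps.
have [N2 HN2] := H2 ((9 / eps) * (9 / eps) + 1).
exists (maxn N1 N2) => n Hn.
have [HL [Ha1 Ha2]] := H1 n ltac:(lia).
have HM := HN2 n ltac:(lia).
set l := L n in HL Ha1 Ha2 HM *.
set s := sqrt l in Ha2.
have Hs : s * s = l by apply sqrt_sqrt; lra.
have Hs0 : 0 <= s by apply sqrt_pos.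
have Hs1 : 1 <= s by nra.
have Hse : 9 / eps < s.
  have H9 : 0 < 9 / eps by apply Rdiv_lt_0_compat; lra.
  destruct (Rlt_or_le (9 / eps) s) as [H|H]; first done.
  have : s * s <= (9 / eps) * (9 / eps) by apply Rmult_le_compat; lra.
  lra.
have Hs9 : 9 < eps * s.
  have H : 9 / eps * eps < s * eps by apply Rmult_lt_compat_r.
  have : 9 / eps * eps = 9 by field; lra.
  nra.
rewrite /R_dist.
have E : a n / l - 1 / 4 = (a n - l / 4) / l by field; lra.
rewrite E.
apply Rabs_def1.
- apply (Rmult_lt_reg_r l); first lra.
  rewrite /Rdiv Rmult_assoc Rinv_l; last lra.
  nra.
- apply (Rmult_lt_reg_r l); first lra.
  rewrite /Rdiv Rmult_assoc Rinv_l; last lra.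
  nra.
Qed.
Lemma INR_expn m n : INR (expn m n) = INR m ^ n.
Proof. elim: n => [|n IH]; first by rewrite expn0.
by rewrite expnS mult_INR IH. Qed.

Lemma INR_leq m n : leq m n -> INR m <= INR n.
Proof. by move=> /leP; apply le_INR. Qed.

Lemma bounds N : leq 256 N ->
  1 <= ln (INR N) /\
  ln (INR N) / 4 - 7 <= ln (INR (compl_count N)) <=
     ln (INR N) / 4 + 7 + 2 * sqrt (ln (INR N)).
Proof.
move=> HN.
have [r [T [Hr4 HT1 Hr HT [Hup Hc1 Hlow]]]] := nat_facts N HN.
set c := compl_count N in Hup Hc1 Hlow *.
have Hln2 := ln_lt_2.
have Hln2' : ln 2 <= 1 by have := ln_le_id 2 ltac:(lra); lra.
have HN' : 256 <= INR N by have := INR_leq _ _ HN; rewrite /=; lra.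
have HNpos : 0 < INR N by lra.
have Hrr : 4 <= INR r by have := INR_leq _ _ Hr4; rewrite /=; lra.
have HTT : 1 <= INR T by have := INR_leq _ _ HT1; rewrite /=; lra.
have Hcc : 1 <= INR c by have := INR_leq _ _ Hc1; rewrite /=; lra.
have HrN : 4 * ln (INR r) <= ln (INR N).
  have := ln_le' (INR r ^ 4) (INR N) ltac:(apply pow_lt; lra).
  rewrite ln_pow; last lra.
  move=> H; have := INR_leq _ _ Hr; rewrite INR_expn => /H; rewrite /=; lra.
have HTN : INR T * ln 2 <= ln (INR N).
  have := ln_le' (2 ^ T) (INR N) ltac:(apply pow_lt; lra).
  rewrite ln_pow; last lra.
  move=> H; apply H; have := INR_leq _ _ HT; rewrite INR_expn.
  replace (INR 2) with 2 by (simpl; lra); lra.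
have HL1 : 1 <= ln (INR N).
  have := ln_le' (2 ^ 8) (INR N) ltac:(apply pow_lt; lra).
  rewrite ln_pow; last lra.
  move=> H; have := H ltac:(simpl; lra); simpl; lra.
split => //; split.
-
  have := ln_le' (INR N) ((8 * INR c) ^ 4) HNpos.
  rewrite ln_pow; last lra.
  rewrite ln_mult; [|lra|lra].
  move=> H; have := H ltac:(have := INR_leq _ _ Hlow; rewrite INR_expn mult_INR /=; lra).
  have H8 : ln 8 <= 7 by have := ln_le_id 8 ltac:(lra); lra.
  simpl; lra.
-
  have Hc : ln (INR c) <= ln (INR r + 1) + ln (INR T + 1).
    rewrite -ln_mult; [|lra|lra].
    apply ln_le'; first lra.
    have := INR_leq _ _ Hup; rewrite mult_INR !S_INR; lra.
  have H1 : ln (INR r + 1) <= ln 2 + ln (INR r).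
    rewrite -ln_mult; [|lra|lra]; apply ln_le'; lra.
  have H2 : ln (INR T + 1) <= ln 2 + ln (INR T).
    rewrite -ln_mult; [|lra|lra]; apply ln_le'; lra.
  have H3 : ln (INR T) <= ln 2 + ln (ln (INR N)).
    rewrite -ln_mult; [|lra|lra]; apply ln_le'; first lra.
    nra.
  have H4 := ln_le_sqrt (ln (INR N)) ltac:(lra).
  lra.
Qed.

Lemma unbounded M : exists N1, forall N, leq N1 N -> M <= ln (INR N).
Proof.
have [n Hn] := INR_unbounded (exp M).
exists n => N HN.
have := INR_leq _ _ HN => H.
have Hexp := exp_pos M.
rewrite -{1}(ln_exp M); apply ln_le'; lra.
Qed.

Theorem mainTheorem5 :
  Un_cv (fun n : nat => ln (INR (compl_count n)) / ln (INR n)) (1 / 4).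
Proof.
apply: (real_conv (fun n => ln (INR (compl_count n))) (fun n => ln (INR n))).
- exists (256:nat) => N HN; exact: bounds.
- exact: unbounded.
Qed.
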